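(* For all integers $n\ge 2$, $$(n+1)\,b_n=(n-1)\left(2b_{n-1}+3b_{n-2}\right).$$
   Context: Let $X(\theta)=1+2\cos\theta$ and, for $k\ge 0$, $\chi_k(\theta)=1+2\sum_{j=1}^{k}\cos(j\theta)$ (the character of the $(k+1)$-dimensional irreducible representation of the Lie algebra $A_1$). For $n\ge 0$ the integers $b_n^{(k)}$, $0\le k\le n$, are the unique coefficients with $X(\theta)^n=\sum_{k=0}^{n}b_n^{(k)}\chi_k(\theta)$ for all real $\theta$. Write $b_n=b_n^{(0)}$. *)

(* Defs.v *)
From Stdlib Require Import Reals ZArith.
Open Scope R_scope.

Definition Xfun (t : R) : R := 1 + 2 * cos t.

Fixpoint cos_sum (k : nat) (t : R) : R :=
  match k with
  | O => 0
  | S k' => cos_sum k' t + cos (INR (S k') * t)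
  end.

Definition chi (k : nat) (t : R) : R := 1 + 2 * cos_sum k t.

(* b : nat -> nat -> Z gives the coefficients b_n^(k) of the decomposition
   X(theta)^n = sum_{k=0}^{n} b_n^(k) chi_k(theta) for all real theta.
   (sum_f_R0 f n = f 0 + ... + f n.) *)
Definition is_char_decomp (b : nat -> nat -> Z) : Prop :=
  forall (n : nat) (t : R),
    Xfun t ^ n = sum_f_R0 (fun k => IZR (b n k) * chi k t) n.

(* Main.v *)
From Coquelicot Require Import Coquelicot.
Require Import Defs.
From Stdlib Require Import Reals Lra Lia ZArith Nsatz.
Open Scope R_scope.

Lemma rint_of (F f : R -> R) a b v :
  (forall x, is_derive F x (f x)) -> (forall x, ex_derive f x) ->
  F b - F a = v -> is_RInt f a b v.
Proof.
  intros HF Hf Hv. rewrite <- Hv.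
  apply (is_RInt_derive F f a b).
  - intros; apply HF.
  - intros; apply (ex_derive_continuous (K:=R_AbsRing) (V:=R_NormedModule)); apply Hf.
Qed.

Lemma sin_nPI j : sin (INR j * PI) = 0.
Proof.
  induction j. simpl. rewrite Rmult_0_l. apply sin_0.
  rewrite S_INR. replace ((INR j + 1) * PI) with (INR j * PI + PI) by ring.
  rewrite neg_sin. rewrite IHj. ring.
Qed.

Definition cc (j : nat) : R :=
  match j with O => PI | 1%nat => - (PI / 2) | _ => 0 end.

Lemma L1 j : is_RInt (fun t => cos (INR j * t) * (1 - cos t)) 0 PI (cc j).
Proof.
  destruct j as [|[|m]].
  - apply (rint_of (fun t => t - sin t)).
    + intros x. auto_derive; auto. simpl. rewrite Rmult_0_l, cos_0. ring.
    + intros x. auto_derive; auto.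
    + simpl. rewrite sin_PI, sin_0. ring.
  - apply (rint_of (fun t => sin t - (t + sin t * cos t) / 2)).
    + intros x. auto_derive; auto. simpl. rewrite (Rmult_1_l x).
      pose proof (sin2_cos2 x). unfold Rsqr in H. nra.
    + intros x. auto_derive; auto.
    + simpl. rewrite sin_PI, sin_0, cos_PI, cos_0. field.
  - set (J := INR (S (S m))).
    assert (HJ : J > 1). { unfold J. rewrite !S_INR. pose proof (pos_INR m). lra. }
    apply (rint_of (fun t => sin (J * t) / J - (J * sin (J * t) * cos t - sin t * cos (J * t)) / (J * J - 1))).
    + intros x. auto_derive; auto. simpl. field. split; nra.
    + intros x. auto_derive; auto.
    + simpl. unfold J. rewrite sin_nPI. rewrite !Rmult_0_r, sin_0, sin_PI. fold J. field. split; nra.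
Qed.


Lemma rint_add (f g : R -> R) a b (u v w : R) : is_RInt f a b u -> is_RInt g a b v -> u + v = w ->
  is_RInt (fun t => f t + g t) a b w.
Proof. intros Hf Hg <-. exact (is_RInt_plus f g a b u v Hf Hg). Qed.
Lemma rint_scal (f : R -> R) a b k (u w : R) : is_RInt f a b u -> k * u = w ->
  is_RInt (fun t => k * f t) a b w.
Proof. intros Hf <-. exact (is_RInt_scal f a b k u Hf). Qed.
Lemma rint_ext' (f g : R -> R) a b (v : R) : (forall t, f t = g t) -> is_RInt f a b v -> is_RInt g a b v.
Proof. intros H. apply is_RInt_ext. intros; apply H. Qed.

Lemma L2 k : is_RInt (fun t => cos_sum k t * (1 - cos t)) 0 PI
   (match k with O => 0%R | _ => - (PI / 2) end : R).
Proof.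
  induction k.
  - apply (rint_ext' (fun _ => 0)). intros t; simpl. rewrite Rmult_0_l. reflexivity.
    apply (rint_of (fun _ => 0)). intros x. auto_derive; auto. intros x; auto_derive; auto. simpl. apply Rminus_0_r.
  - apply (rint_ext' (fun t => cos_sum k t * (1 - cos t) + cos (INR (S k) * t) * (1 - cos t))).
    intros t; simpl; ring.
    eapply rint_add. apply IHk. apply L1. destruct k; simpl; ring.
Qed.

Lemma L3 k : is_RInt (fun t => chi k t * (1 - cos t)) 0 PI
   (match k with O => PI | _ => 0%R end : R).
Proof.
  apply (rint_ext' (fun t => cos (INR 0 * t) * (1 - cos t) + 2 * (cos_sum k t * (1 - cos t)))).
  intros t; unfold chi; simpl. rewrite Rmult_0_l, cos_0. ring.
  eapply rint_add. apply (L1 0). eapply rint_scal. apply L2. reflexivity.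
  destruct k; simpl; field.
Qed.

Lemma L4 (a : nat -> R) m : is_RInt (fun t => sum_f_R0 (fun k => a k * chi k t) m * (1 - cos t)) 0 PI (PI * a 0%nat).
Proof.
  induction m.
  - simpl. apply (rint_ext' (fun t => a 0%nat * (chi 0 t * (1 - cos t)))). intros; simpl; ring.
    eapply rint_scal. apply (L3 0). simpl; ring.
  - apply (rint_ext' (fun t => sum_f_R0 (fun k => a k * chi k t) m * (1 - cos t) + a (S m) * (chi (S m) t * (1 - cos t)))).
    intros; simpl; ring.
    eapply rint_add. apply IHm. eapply rint_scal. apply (L3 (S m)). reflexivity. simpl; ring.
Qed.

Lemma L5 m : is_RInt (fun t => ((INR m + 3) * Xfun t ^ (S (S m)) - (INR m + 1) * (2 * Xfun t ^ (S m) + 3 * Xfun t ^ m)) * (1 - cos t)) 0 PI 0.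
Proof.
  apply (rint_of (fun t => Xfun t ^ (S m) * (2 * sin t - sin (2 * t)))).
  - intros x. unfold Xfun. auto_derive; auto.
    replace (match m with 0%nat => 1 | S _ => INR m + 1 end) with (INR m + 1) by (destruct m; simpl; ring).
    rewrite sin_2a, cos_2a_cos.
    pose proof (sin2_cos2 x) as H. unfold Rsqr in H.
    simpl pow. set (P := (1 + 2 * cos x) ^ m). set (M := INR m). set (s := sin x) in *. set (c := cos x) in *.
    nsatz.
  - intros x. unfold Xfun. auto_derive; auto.
  - rewrite !Rmult_0_r, sin_0, sin_PI, sin_2PI. ring.
Qed.

Lemma Ib (b : nat -> nat -> Z) (hb : is_char_decomp b) n :
  is_RInt (fun t => Xfun t ^ n * (1 - cos t)) 0 PI (PI * IZR (b n 0%nat)).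
Proof.
  apply (rint_ext' (fun t => sum_f_R0 (fun k => IZR (b n k) * chi k t) n * (1 - cos t))).
  intros t. rewrite hb. reflexivity. apply L4.
Qed.

Theorem mainTheorem10 (b : nat -> nat -> Z) (hb : is_char_decomp b) (n : nat)
  (hn : (2 <= n)%nat) :
  ((Z.of_nat n + 1) * b n 0%nat =
   (Z.of_nat n - 1) * (2 * b (n - 1)%nat 0%nat + 3 * b (n - 2)%nat 0%nat))%Z.
Proof.
  destruct n as [|[|m]]; try lia.
  replace (S (S m) - 1)%nat with (S m) by lia.
  replace (S (S m) - 2)%nat with m by lia.
  set (B2 := IZR (b (S (S m)) 0%nat)). set (B1 := IZR (b (S m) 0%nat)). set (B0 := IZR (b m 0%nat)).
  assert (H : is_RInt (fun t => ((INR m + 3) * Xfun t ^ (S (S m)) - (INR m + 1) * (2 * Xfun t ^ (S m) + 3 * Xfun t ^ m)) * (1 - cos t)) 0 PI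
     (PI * ((INR m + 3) * B2 - (INR m + 1) * (2 * B1 + 3 * B0)))).
  { apply (rint_ext' (fun t => (INR m + 3) * (Xfun t ^ (S (S m)) * (1 - cos t)) +
       (- (INR m + 1)) * (2 * (Xfun t ^ (S m) * (1 - cos t)) + 3 * (Xfun t ^ m * (1 - cos t))))).
    intros; ring.
    eapply rint_add. eapply rint_scal. apply (Ib b hb). reflexivity.
    eapply rint_scal. eapply rint_add. eapply rint_scal. apply (Ib b hb). reflexivity.
    eapply rint_scal. apply (Ib b hb). reflexivity. reflexivity.
    reflexivity. unfold B2, B1, B0. ring. }
  pose proof (is_RInt_unique (V:=R_CompleteNormedModule) _ _ _ _ H) as H1.
  rewrite (is_RInt_unique (V:=R_CompleteNormedModule) _ _ _ _ (L5 m)) in H1. clear H. rename H1 into H.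
  assert (HA : (INR m + 3) * B2 - (INR m + 1) * (2 * B1 + 3 * B0) = 0).
  { pose proof PI_RGT_0. apply (Rmult_eq_reg_l PI). rewrite <- H. ring. lra. }
  apply eq_IZR. rewrite !mult_IZR, !plus_IZR, !minus_IZR, <- !INR_IZR_INZ.
  rewrite !S_INR. fold B2 B1 B0. simpl (IZR 1). simpl (IZR 2). simpl (IZR 3). rewrite !mult_IZR. simpl (IZR 2). simpl (IZR 3). apply Rminus_diag_uniq. rewrite <- HA. unfold B2, B1, B0. ring.
Qed.
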